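(* (i) If for some $m\ge0$ every solution of the expanded equation $z_{n+1}=\sum_{j=0}^{k-1}b_{m,j}z_{n-m-j}$ converges to $0$, then every solution of $x_{n+1}=\sum_{j=0}^{k-1}a_jx_{n-j}$ converges to $0$. (ii) If every solution of $x_{n+1}=\sum_{j=0}^{k-1}a_jx_{n-j}$ converges to $0$ and, for some $m\ge 0$, all zeros of $q_m$ lie in the open unit disk $\mathbb{D}=\{z\in\mathbb{C}:|z|<1\}$, then every solution of $z_{n+1}=\sum_{j=0}^{k-1}b_{m,j}z_{n-m-j}$ converges to $0$.
   Context: Let $k\ge 2$, $a_0,\dots,a_{k-1}\in\mathbb{R}$, $a_0\ne0$. Define $b_{0,j}=a_j$ ($0\le j\le k-1$) and for $m\ge0$: $b_{m+1,j}=a_jb_{m,0}+b_{m,j+1}$ ($0\le j\le k-2$), $b_{m+1,k-1}=a_{k-1}b_{m,0}$. The equation $z_{n+1}=\sum_{j=0}^{k-1}b_{m,j}z_{n-m-j}$ (with $m+k$ arbitrary real initial values) is the $m$-times expanded equation. $q_m(x)=x^m+\sum_{i=0}^{m-1}b_{i,0}x^{m-i-1}$, with $q_0\equiv 1$. (Every solution converging to $0$ is equivalent to all zeros of the corresponding characteristic polynomial lying in $\mathbb{D}$.) *)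

(* Defs.v *)
From HB Require Import structures.
From mathcomp Require Import all_boot all_order all_algebra.
From mathcomp Require Import complex.
From mathcomp Require Import all_classical all_reals all_analysis.
Set Implicit Arguments. Unset Strict Implicit. Unset Printing Implicit Defensive.
Import Order.TTheory GRing.Theory Num.Theory.
Import numFieldNormedType.Exports.
Local Open Scope ring_scope.

(* Coefficients b_{m,j} of the m-times expanded equation.
   b 0 j = a j ;  b (m+1) j = a j * b m 0 + b m (j+1)  for j <= k-2,
   b (m+1) (k-1) = a (k-1) * b m 0. Only indices j < k are meaningful. *)
Fixpoint exp_bcoef (R : nzRingType) (k : nat) (a : nat -> R) (m : nat) : nat -> R :=
  match m with
  | 0 => a
  | m'.+1 => fun j => a j * exp_bcoef k a m' 0 +
                       (if (j.+1 < k)%N then exp_bcoef k a m' j.+1 else 0)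
  end.

Definition solves_rec (R : nzRingType) (k d : nat) (c : nat -> R) (x : nat -> R) :=
  forall n : nat, (d + k - 1 <= n)%N ->
    x n.+1 = \sum_(j < k) c j * x (n - d - j)%N.

Definition expq_poly (R : nzRingType) (k : nat) (a : nat -> R) (m : nat) : {poly R} :=
  'X^m + \sum_(i < m) (exp_bcoef k a i 0)%:P * 'X^(m - i - 1).

Definition zeros_in_unit_disk (R : rcfType) (p : {poly R}) :=
  forall z : R[i], root (map_poly (fun r : R => r%:C)%C p) z -> `|z| < 1.

(* Main.v *)
Require Import Defs.
From HB Require Import structures.
From mathcomp Require Import all_boot all_order all_algebra.
From mathcomp Require Import complex.
From mathcomp Require Import all_classical all_reals all_analysis.
From mathcomp Require Import zify ring lra.
Set Implicit Arguments. Unset Strict Implicit. Unset Printing Implicit Defensive.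
Import Order.TTheory GRing.Theory Num.Theory.
Import numFieldNormedType.Exports.
Local Open Scope classical_set_scope.
Local Open Scope ring_scope.
Section Star.
Variable T : comNzRingType.
Implicit Types (p q s : {poly T}) (u : nat -> T).

Definition star p u (n : nat) : T := \sum_(i < size p) p`_i * u (n + i)%N.

Lemma starE p u n N : (size p <= N)%N -> star p u n = \sum_(i < N) p`_i * u (n + i)%N.
Proof.
move=> hN; rewrite /star (big_ord_widen N (fun i => p`_i * u (n + i)%N)) //.
rewrite big_mkcond; apply: eq_bigr => i _.
case: ifP => // /negbT; rewrite -leqNgt => hi.
by rewrite nth_default // mul0r.
Qed.

Lemma eq_star p u1 u2 n : (forall m, u1 m = u2 m) -> star p u1 n = star p u2 n.
Proof. by move=> h; apply: eq_bigr => i _; rewrite h. Qed.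

Lemma star0 u n : star 0 u n = 0.
Proof. by rewrite /star size_poly0 big_ord0. Qed.

Lemma starD p q u n : star (p + q) u n = star p u n + star q u n.
Proof.
have hp : (size p <= maxn (size p) (size q))%N by rewrite leq_maxl.
have hq : (size q <= maxn (size p) (size q))%N by rewrite leq_maxr.
have hpq : (size (p + q)%R <= maxn (size p) (size q))%N by apply: size_polyD.
rewrite (starE _ _ hp) (starE _ _ hq) (starE _ _ hpq) -big_split /=.
by apply: eq_bigr => i _; rewrite coefD mulrDl.
Qed.

Lemma starZ c p u n : star (c *: p) u n = c * star p u n.
Proof.
rewrite (starE _ _ (size_scale_leq c p)) /star mulr_sumr.
by apply: eq_bigr => i _; rewrite coefZ mulrA.
Qed.

Lemma starN p u n : star (- p) u n = - star p u n.
Proof. by rewrite -scaleN1r starZ mulN1r. Qed.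

Lemma starB p q u n : star (p - q) u n = star p u n - star q u n.
Proof. by rewrite starD starN. Qed.

Lemma starXM p u n : star ('X * p) u n = star p u n.+1.
Proof.
have h : (size ('X * p)%R <= (size p).+1)%N.
  apply: leq_trans (size_mul_leq _ _) _; rewrite size_polyX.
  by case: (size p).
rewrite (starE _ _ h) big_ord_recl coefXM eqxx mul0r add0r /star.
apply: eq_bigr => i _; rewrite coefXM /=.
by rewrite addnS addSn.
Qed.

Lemma starC c u n : star c%:P u n = c * u n.
Proof.
rewrite (starE _ _ (size_polyC_leq1 c)) big_ord1 coefC eqxx addn0 //.
Qed.

Lemma star1 u n : star 1 u n = u n.
Proof. by rewrite starC mul1r. Qed.

Lemma starXn i u n : star 'X^i u n = u (n + i)%N.
Proof.
elim: i n => [|i IH] n; first by rewrite expr0 star1 addn0.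
by rewrite exprS starXM IH addSnnS.
Qed.

Lemma starCXn c i u n : star (c%:P * 'X^i) u n = c * u (n + i)%N.
Proof. by rewrite mul_polyC starZ starXn. Qed.

Lemma star_sum (I : Type) (r : seq I) (P : pred I) (F : I -> {poly T}) u n :
  star (\sum_(i <- r | P i) F i) u n = \sum_(i <- r | P i) star (F i) u n.
Proof.
elim/big_rec2: _ => [|i y p _ <-]; first by rewrite star0.
by rewrite starD.
Qed.

Lemma star_addu p u1 u2 n :
  star p (fun m => u1 m + u2 m) n = star p u1 n + star p u2 n.
Proof. by rewrite /star -big_split; apply: eq_bigr => i _; rewrite mulrDr. Qed.

Lemma star_mulu p c u n : star p (fun m => c * u m) n = c * star p u n.
Proof.
by rewrite /star mulr_sumr; apply: eq_bigr => i _; rewrite mulrCA.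
Qed.

Lemma star_shift p u n : star p u n.+1 = star p (fun m => u m.+1) n.
Proof. by apply: eq_bigr => i _; rewrite addSn. Qed.

Lemma starM p s u n : star (p * s) u n = star s (star p u) n.
Proof.
elim/poly_ind: p u n => [|p c IH] u n.
  rewrite mul0r star0 (eq_star _ _ (fun m => star0 u m)).
  by rewrite /star big1 // => i _; rewrite mulr0.
have e : (p * 'X + c%:P) * s = 'X * (p * s) + c *: s.
  by rewrite -mul_polyC; ring.
rewrite e starD starXM starZ IH.
have e2 : forall m, star (p * 'X + c%:P) u m = star p u m.+1 + c * u m.
  move=> m; rewrite starD starC; congr (_ + _).
  by rewrite mulrC starXM.
rewrite (eq_star _ _ e2) star_addu star_mulu star_shift //.
Qed.

End Star.
Definition ppoly (T : comNzRingType) (k : nat) (a : nat -> T) : {poly T} := 'X^k - \sum_(j < k) (a j)%:P * 'X^(k - 1 - j).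
Definition PPoly (T : comNzRingType) (k : nat) (a : nat -> T) m : {poly T} :=
  'X^(m + k) - \sum_(j < k) (exp_bcoef k a m j)%:P * 'X^(k - 1 - j).

Lemma expq_S (T : comNzRingType) (k : nat) (a : nat -> T) m : expq_poly k a m.+1 = 'X * expq_poly k a m + (exp_bcoef k a m 0)%:P.
Proof.
rewrite /expq_poly big_ord_recr /=.
have -> : (m.+1 - m - 1 = 0)%N by lia.
rewrite expr0 mulr1 mulrDr addrA.
congr (_ + _); rewrite exprS; congr (_ + _).
rewrite mulr_sumr; apply: eq_bigr => i _.
have -> : (m.+1 - i - 1 = (m - i - 1).+1)%N by have := ltn_ord i; lia.
by rewrite exprS mulrCA.
Qed.

Lemma ident_step (T : comNzRingType) (k' : nat) (a : nat -> T) m :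
  PPoly k'.+1 a m.+1 = 'X * PPoly k'.+1 a m + (exp_bcoef k'.+1 a m 0) *: ppoly k'.+1 a.
Proof.
rewrite /PPoly /ppoly /= !subn1 /=.
set B := exp_bcoef k'.+1 a m.
set SA := \sum_(j < k'.+1) (a j)%:P * 'X^(k' - j).
set SB := \sum_(j < k') (B j.+1)%:P * 'X^(k' - j).
have F1 : \sum_(j < k'.+1) (a j * B 0%N + (if (j.+1 < k'.+1)%N then B j.+1 else 0))%:P
      * 'X^(k' - j) = (B 0%N)%:P * SA + SB.
  under eq_bigr do rewrite polyCD mulrDl.
  rewrite big_split /= mulr_sumr; congr (_ + _).
    by apply: eq_bigr => j _; rewrite polyCM mulrA [_ * (B 0%N)%:P]mulrC.
  rewrite big_ord_recr /= ltnn mul0r addr0; apply: eq_bigr => j _.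
  by rewrite /= ltnS ltn_ord.
have F2 : 'X * \sum_(j < k'.+1) (B j)%:P * 'X^(k' - j) = (B 0%N)%:P * 'X^(k'.+1) + SB.
  rewrite mulr_sumr big_ord_recl /= subn0 mulrCA -exprS; congr (_ + _).
  apply: eq_bigr => j _; rewrite mulrCA -exprS /bump /=.
  by have := ltn_ord j; move=> hj; congr (_ * 'X^_); lia.
rewrite F1 mulrBr F2 -!mul_polyC addSn exprS; ring.
Qed.

Lemma ident (T : comNzRingType) (k : nat) (a : nat -> T) m :
  (0 < k)%N -> PPoly k a m = ppoly k a * expq_poly k a m.
Proof.
case: k => [//|k'] _.
elim: m => [|m IH].
  rewrite /PPoly /expq_poly big_ord0 addr0 expr0 mulr1 add0n /ppoly //.
rewrite ident_step IH -mul_polyC expq_S; ring.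
Qed.
Lemma expand (T : comNzRingType) (k : nat) (a : nat -> T) (x : nat -> T) m :
  (0 < k)%N -> solves_rec k 0 a x -> solves_rec k m (exp_bcoef k a m) x.
Proof.
case: k => [//|k'] _ H0.
elim: m => [//|m IH] n hn.
rewrite (IH n); last by lia.
rewrite big_ord_recl /= subn0.
have -> : (n - m = (n - m - 1).+1)%N by lia.
rewrite (H0 (n - m - 1)%N); last by lia.
under [in RHS]eq_bigr do rewrite mulrDl.
rewrite big_split /= [X in _ = _ + X]big_ord_recr /= ltnn mul0r addr0 mulr_sumr.
congr (_ + _).
  apply: eq_bigr => j _; rewrite -mulrA mulrCA; congr (_ * (_ * x _)); lia.
apply: eq_bigr => j _; rewrite /bump /= ltnS ltn_ord; congr (_ * x _); lia.
Qed.
Definition ev0 (R : realType) (x : nat -> R) :=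
  forall e : R, 0 < e -> exists N, forall n, (N <= n)%N -> `|x n| < e.

Lemma ev0P (R : realType) (x : nat -> R) : x @ \oo --> (0:R) <-> ev0 x.
Proof.
split.
- move=> /cvgr0Pnorm_lt H e e0. have [N _ HN] := H e e0. by exists N => n Hn; apply: HN.
- move=> H; apply/cvgr0Pnorm_lt => e e0. have [N HN] := H e e0. by exists N.
Qed.

Lemma first_order_real (R : realType) (c : R) (A B : nat -> R) :
  0 <= c -> c < 1 -> (forall n, 0 <= A n) ->
  (forall n, A n.+1 <= c * A n + B n) -> ev0 B -> ev0 A.
Proof.
move=> c0 c1 A0 HA HB e e0.
have d0 : 0 < e * (1 - c) / 2 by apply: divr_gt0 => //; apply: mulr_gt0; lra.
have [N HN] := HB _ d0.
set M := A N.
have key : forall j, A (N + j)%N - e / 2 <= c ^+ j * M.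
  elim=> [|j IH]; first by rewrite addn0 expr0 mul1r /M; have := A0 N; lra.
  have hB : B (N + j)%N < e * (1 - c) / 2.
    by apply: le_lt_trans (ler_norm _) (HN _ _); rewrite leq_addr.
  have h1 := ler_wpM2l c0 IH.
  have h2 := HA (N + j)%N.
  rewrite addnS exprS -mulrA.
  nra.
have hc : `|c| < 1 by rewrite ger0_norm.
have := cvg_expr hc => /ev0P Hc.
have M0 : 0 <= M by apply: A0.
have eM : 0 < e / 2 / (M + 1) by apply: divr_gt0; lra.
have [J HJ] := Hc _ eM.
exists (N + J)%N => n hn.
have -> : n = (N + (n - N))%N by lia.
have := key (n - N)%N.
have := HJ (n - N)%N ltac:(lia).
rewrite ger0_norm ?exprn_ge0 // => h1 h2.
rewrite ger0_norm //.
have h3 : c ^+ (n - N) * M <= e / 2 / (M + 1) * M.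
  by apply: ler_wpM2r => //; apply: ltW.
have h4 : e / 2 / (M + 1) * M < e / 2.
  rewrite mulrAC ltr_pdivrMr; last lra.
  nra.
have h5 := le_lt_trans h2 (le_lt_trans h3 h4).
clear -h5 e0. lra.
Qed.
Import Normc.
Local Open Scope complex_scope.

Section Cplx.
Variable R : realType.
Local Notation C := R[i].

Definition cev0 (u : nat -> C) := ev0 (fun n => normc (u n)).

Lemma normc_ge0 (x : C) : 0 <= normc x.
Proof. by case: x => a b; rewrite /normc sqrtr_ge0. Qed.

Lemma cev0_ext (u v : nat -> C) : (forall n, u n = v n) -> cev0 u -> cev0 v.
Proof.
move=> h H e e0; have [N HN] := H e e0; exists N => n hn; rewrite -h; exact: HN.
Qed.

Lemma normc_real (r : R) : normc (r%:C) = `|r|.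
Proof. by rewrite /normc /= expr0n addr0 sqrtr_sqr. Qed.

Lemma cev0_real (x : nat -> R) : cev0 (fun n => (x n)%:C) <-> ev0 x.
Proof.
split=> H e e0; have [N HN] := H e e0; exists N => n hn; have := HN n hn;
  by rewrite normc_real normr_id.
Qed.

Lemma first_order_C (l : C) (u : nat -> C) :
  normc l < 1 -> cev0 (fun n => u n.+1 - l * u n) -> cev0 u.
Proof.
move=> hl H.
apply: (@first_order_real R (normc l) (fun n => normc (u n))
   (fun n => normc (u n.+1 - l * u n))) => //.
- exact: normc_ge0.
- by move=> n; exact: normc_ge0.
- move=> n; rewrite -{1}(subrK (l * u n) (u n.+1)).
  apply: le_trans (le_normcD _ _) _.
  by rewrite normcM addrC.
Qed.

Lemma prod_stable (rs : seq C) : (forall z, z \in rs -> normc z < 1) ->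
  forall u, cev0 (star (\prod_(z <- rs) ('X - z%:P)) u) -> cev0 u.
Proof.
elim: rs => [|z rs IH] hrs u.
  by rewrite big_nil; apply: cev0_ext => n; rewrite star1.
rewrite big_cons => H.
have hz : normc z < 1 by apply: hrs; rewrite mem_head.
apply: (first_order_C hz).
have H2 : cev0 (star ('X - z%:P) u).
  apply: IH; first by move=> y hy; apply: hrs; rewrite in_cons hy orbT.
  by apply: cev0_ext H => n; rewrite starM.
apply: cev0_ext H2 => n.
by rewrite starB starC -['X]expr1 starXn addn1.
Qed.

End Cplx.
Lemma lead_XnB (T : nzRingType) n (q : {poly T}) :
  (size q <= n)%N -> lead_coef ('X^n - q) = 1.
Proof. by move=> h; rewrite lead_coefDl ?lead_coefXn // size_polyN size_polyXn ltnS. Qed.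

Lemma lead_XnD (T : nzRingType) n (q : {poly T}) :
  (size q <= n)%N -> lead_coef ('X^n + q) = 1.
Proof. by move=> h; rewrite lead_coefDl ?lead_coefXn // size_polyXn ltnS. Qed.

Lemma size_sum_le (T : nzRingType) n N (F : 'I_N -> {poly T}) :
  (forall i, size (F i) <= n)%N -> (size (\sum_(i < N) F i)%R <= n)%N.
Proof.
move=> h; elim/big_ind: _ => //; first by rewrite size_poly0.
by move=> p q hp hq; apply: leq_trans (size_polyD _ _) _; rewrite geq_max hp hq.
Qed.

Lemma size_CXn (T : nzRingType) (c : T) d : (size (c%:P * 'X^d)%R <= d.+1)%N.
Proof. by rewrite mul_polyC; apply: leq_trans (size_scale_leq _ _) _; rewrite size_polyXn. Qed.

Lemma ppoly_monic (T : comNzRingType) k (a : nat -> T) : (0 < k)%N -> lead_coef (ppoly k a) = 1.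
Proof.
move=> k0; apply: lead_XnB; apply: size_sum_le => i.
by apply: leq_trans (size_CXn _ _) _; lia.
Qed.

Lemma expq_monic (T : comNzRingType) k (a : nat -> T) m : lead_coef (expq_poly k a m) = 1.
Proof.
apply: lead_XnD; apply: size_sum_le => i.
by apply: leq_trans (size_CXn _ _) _; have := ltn_ord i; lia.
Qed.

Lemma map_ppoly (A B : comNzRingType) (f : {rmorphism A -> B}) k (a : nat -> A) :
  map_poly f (ppoly k a) = ppoly k (fun j => f (a j)).
Proof.
rewrite /ppoly rmorphB /= map_polyXn rmorph_sum; congr (_ - _).
by apply: eq_bigr => j _; rewrite rmorphM /= map_polyC map_polyXn.
Qed.

Lemma map_PPoly (A B : comNzRingType) (f : {rmorphism A -> B}) k (a : nat -> A) m :
  map_poly f (PPoly k a m) =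
  'X^(m + k) - \sum_(j < k) (f (exp_bcoef k a m j))%:P * 'X^(k - 1 - j).
Proof.
rewrite /PPoly rmorphB /= map_polyXn rmorph_sum; congr (_ - _).
by apply: eq_bigr => j _; rewrite rmorphM /= map_polyC map_polyXn.
Qed.

Lemma normcX (R : realType) (l : R[i]) n : normc (l ^+ n) = normc l ^+ n.
Proof.
elim: n => [|n IH]; first by rewrite !expr0 normc1.
by rewrite !exprS normcM IH.
Qed.

Lemma ReD (R : realType) (x y : R[i]) : complex.Re (x + y) = complex.Re x + complex.Re y.
Proof. by case: x; case: y. Qed.
Lemma ImD (R : realType) (x y : R[i]) : complex.Im (x + y) = complex.Im x + complex.Im y.
Proof. by case: x; case: y. Qed.
Lemma ReCM (R : realType) (r : R) (y : R[i]) : complex.Re (r%:C * y) = r * complex.Re y.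
Proof. by case: y => u v /=; rewrite mul0r subr0. Qed.
Lemma ImCM (R : realType) (r : R) (y : R[i]) : complex.Im (r%:C * y) = r * complex.Im y.
Proof. by case: y => u v /=; rewrite mul0r addr0. Qed.
Lemma Re_sum (R : realType) N (F : 'I_N -> R[i]) : complex.Re (\sum_(i < N) F i) = \sum_(i < N) complex.Re (F i).
Proof. by apply: (big_morph _ (@ReD R)). Qed.
Lemma Im_sum (R : realType) N (F : 'I_N -> R[i]) : complex.Im (\sum_(i < N) F i) = \sum_(i < N) complex.Im (F i).
Proof. by apply: (big_morph _ (@ImD R)). Qed.

Lemma ppoly_roots (R : realType) k (a : nat -> R) : (0 < k)%N ->
  (forall x : nat -> R, solves_rec k 0 a x -> x @ \oo --> (0 : R)) ->
  forall l : R[i], root (map_poly (real_complex R) (ppoly k a)) l -> normc l < 1.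
Proof.
move=> k0 H l hroot; rewrite ltNge; apply/negP => hge.
have E : l ^+ k = \sum_(j < k) (a j)%:C * l ^+ (k - 1 - j).
  move: hroot; rewrite /root map_ppoly /ppoly hornerD hornerN hornerXn horner_sum.
  rewrite subr_eq0 => /eqP ->; apply: eq_bigr => j _.
  by rewrite hornerCM hornerXn.
pose w n := l ^+ n.
have Hw : forall n, (k - 1 <= n)%N -> w n.+1 = \sum_(j < k) (a j)%:C * w (n - j)%N.
  move=> n hn; rewrite /w.
  have -> : n.+1 = ((n.+1 - k) + k)%N by lia.
  rewrite exprD E mulr_sumr; apply: eq_bigr => j _.
  rewrite mulrCA -exprD; congr (_ * l ^+ _); have := ltn_ord j; lia.
have H1 : ev0 (fun n => complex.Re (w n)).
  apply/ev0P/H => n hn; rewrite (Hw n); last by lia.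
  by rewrite Re_sum; apply: eq_bigr => j _; rewrite ReCM subn0.
have H2 : ev0 (fun n => complex.Im (w n)).
  apply/ev0P/H => n hn; rewrite (Hw n); last by lia.
  by rewrite Im_sum; apply: eq_bigr => j _; rewrite ImCM subn0.
have hh : (0 : R) < 1 / 2 by lra.
have [N1 h1] := H1 _ hh; have [N2 h2] := H2 _ hh.
set n := maxn N1 N2.
have := h1 n (leq_maxl _ _); have := h2 n (leq_maxr _ _).
have hn1 : 1 <= normc (w n) by rewrite /w normcX exprn_ege1.
have e : normc (w n) = Num.sqrt (complex.Re (w n) ^+ 2 + complex.Im (w n) ^+ 2) by case: (w n).
rewrite e in hn1.
move: hn1; set x1 := complex.Re (w n); set x2 := complex.Im (w n).
move=> hn1; rewrite !ltr_norml => /andP [a1 a2] /andP [b1 b2].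
have : Num.sqrt (x1 ^+ 2 + x2 ^+ 2) < 1.
  rewrite -sqrtr1 ltr_sqrt //; nra.
lra.
Qed.
Unset Implicit Arguments.
Lemma norm_normc (R : realType) (w : R[i]) : `|w| = (normc w)%:C.
Proof. by rewrite normc_def; case: w. Qed.

Theorem mainTheorem6 (R : realType) (k : nat) (a : nat -> R) :
  (2 <= k)%N -> a 0%N != 0 ->
  (* (i) *)
  ((exists m : nat, forall z : nat -> R,
      solves_rec k m (exp_bcoef k a m) z -> z @ \oo --> (0 : R)) ->
   forall x : nat -> R, solves_rec k 0 a x -> x @ \oo --> (0 : R))
  /\
  (* (ii) *)
  ((forall x : nat -> R, solves_rec k 0 a x -> x @ \oo --> (0 : R)) ->
   forall m : nat, zeros_in_unit_disk (expq_poly k a m) ->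
   forall z : nat -> R, solves_rec k m (exp_bcoef k a m) z -> z @ \oo --> (0 : R)).
Proof.
move=> k2 _; have k0 : (0 < k)%N by lia.
split.
  by move=> [m Hm] x hx; apply: Hm; apply: expand.
move=> H m Hq z hz.
pose f := real_complex R.
pose pC := map_poly f (ppoly k a).
pose qC := map_poly f (expq_poly k a m).
have [rs1 e1] := closed_field_poly_normal pC.
have [rs2 e2] := closed_field_poly_normal qC.
have l1 : lead_coef pC = 1 by rewrite lead_coef_map ppoly_monic // rmorph1.
have l2 : lead_coef qC = 1 by rewrite lead_coef_map expq_monic // rmorph1.
rewrite l1 scale1r in e1; rewrite l2 scale1r in e2.
have hP : map_poly f (PPoly k a m) = \prod_(w <- rs1 ++ rs2) ('X - w%:P).
  by rewrite ident // rmorphM big_cat -e1 -e2.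
have roots : forall w, w \in rs1 ++ rs2 -> normc w < 1.
  move=> w; rewrite mem_cat => /orP [h|h].
    by apply: (ppoly_roots k0 H); rewrite -/pC e1 root_prod_XsubC.
  have : root qC w by rewrite e2 root_prod_XsubC.
  move=> /Hq; rewrite norm_normc -ltcR //.
have hz0 : cev0 (star (map_poly f (PPoly k a m)) (fun n => (z n)%:C)).
  move=> e e0; exists 0%N => n _.
  suff -> : star (map_poly f (PPoly k a m)) (fun n => (z n)%:C) n = 0.
    by rewrite normc0 normr0.
  rewrite map_PPoly starB starXn star_sum.
  apply/eqP; rewrite subr_eq0; apply/eqP.
  under eq_bigr do rewrite starCXn -rmorphM.
  rewrite -rmorph_sum; congr (_ %:C).
  have -> : (n + (m + k) = (n + m + k - 1).+1)%N by lia.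
  rewrite hz; last by lia.
  by apply: eq_bigr => j _; congr (_ * z _); have := ltn_ord j; lia.
rewrite hP in hz0.
have := prod_stable roots hz0.
by move=> /cev0_real /ev0P.
Qed.
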